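(* Let $A=(A^m(x_1,\dots,x_m))_{m\ge0}$ be a mould with $A^0=0$ such that $A^m(x_1,\dots,x_m)=A^{m-1}(x_1,\dots,x_{m-1})-A^{m-1}(x_2,\dots,x_m)$ for all $m\ge2$. Then $A$ is alternal.
   Context: A mould is a family $A=(A^m(x_1,\dots,x_m))_{m\ge0}$ with $A^m\in\mathbb{Q}((x_1,\dots,x_m))$ (fraction field of $\mathbb{Q}[[x_1,\dots,x_m]]$), extended linearly to formal linear combinations of words. The shuffle product of words is defined by $\emptyset\,\text{ш}\,\omega=\omega\,\text{ш}\,\emptyset=\omega$ and $a\omega\,\text{ш}\,b\eta=a(\omega\,\text{ш}\,b\eta)+b(a\omega\,\text{ш}\,\eta)$. A mould $A$ with $A^0=0$ is alternal if $A^{p+q}\bigl((x_1,\dots,x_p)\,\text{ш}\,(x_{p+1},\dots,x_{p+q})\bigr)=0$ for all $p,q\ge1$. *)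

(* Defs.v *)
From HB Require Import structures.
From mathcomp Require Import all_boot all_order all_algebra.
Set Implicit Arguments. Unset Strict Implicit. Unset Printing Implicit Defensive.
Import GRing.Theory.
Local Open Scope ring_scope.

(* A word in the variables x_0, x_1, x_2, ... is encoded as the sequence of
   the indices of its letters: [:: i1; ...; im] stands for (x_i1, ..., x_im). *)

(* Shuffle product of words, as a list (multiset) of words: a formal linear
   combination with nonnegative integer coefficients given by multiplicity.
   shuffle [::] t = [:: t],  shuffle s [::] = [:: s],
   shuffle (a::s) (b::t) = a.(shuffle s (b::t)) + b.(shuffle (a::s) t). *)
Fixpoint shuffle (s : seq nat) : seq nat -> seq (seq nat) :=
  match s with
  | [::] => fun t => [:: t]
  | a :: s' =>
      fix shuf_t (t : seq nat) : seq (seq nat) :=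
        match t with
        | [::] => [:: a :: s']
        | b :: t' => map (cons a) (shuffle s' t) ++ map (cons b) (shuf_t t')
        end
  end.

(* A mould with values in V, evaluated on words:
   A w = A^m (x_{w_1}, ..., x_{w_m}) with m = size w.
   Only words with pairwise distinct letters (injective renamings of the
   variables x_1..x_m) are relevant. *)
Definition mould (V : zmodType) := seq nat -> V.

Definition mould_lin (V : zmodType) (A : mould V) (ws : seq (seq nat)) : V :=
  \sum_(w <- ws) A w.

Definition alternal (V : zmodType) (A : mould V) : Prop :=
  A [::] = 0 /\
  forall p q : nat, (0 < p)%N -> (0 < q)%N ->
    mould_lin A (shuffle (iota 1 p) (iota p.+1 q)) = 0.

(* Main.v *)
Require Import Defs.
From HB Require Import structures.
From mathcomp Require Import all_boot all_order all_algebra.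
From mathcomp Require Import zify.
Local Open Scope ring_scope.
Import GRing.Theory.

Arguments shuffle : simpl never.
Definition Lw (w : seq nat) := take (size w).-1 w.
Arguments Lw : simpl never.

Lemma Lcons a w : w != [::] -> Lw (a :: w) = a :: Lw w.
Proof. by case: w => // x w _; rewrite /Lw. Qed.

Lemma L1 a : Lw [:: a] = [::].
Proof. by rewrite /Lw. Qed.

Lemma shuffle_s0 s : shuffle s [::] = [:: s].
Proof. by case: s. Qed.

Lemma shuffle_0s t : shuffle [::] t = [:: t].
Proof. by []. Qed.

Lemma shuffle_cons a s b t : shuffle (a :: s) (b :: t) =
  map (cons a) (shuffle s (b :: t)) ++ map (cons b) (shuffle (a :: s) t).
Proof. by []. Qed.

Lemma mem_shuffle_cons a s b t (w : seq nat) : (w \in shuffle (a :: s) (b :: t)) =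
  (w \in map (cons a) (shuffle s (b :: t))) || (w \in map (cons b) (shuffle (a :: s) t)).
Proof. by rewrite -mem_cat. Qed.

Lemma shuffle_perm s t w : w \in shuffle s t -> perm_eq w (s ++ t).
Proof.
elim: s t w => [|a s IHs] t w; first by rewrite shuffle_0s inE => /eqP->.
elim: t w => [|b t IHt] w; first by rewrite shuffle_s0 inE cats0 => /eqP->.
rewrite mem_shuffle_cons => /orP[] /mapP[w' Hw' ->].
  by rewrite /= perm_cons; apply: IHs.
apply: perm_trans (_ : perm_eq _ (b :: (a :: s ++ t))) _.
  by rewrite perm_cons; apply: IHt.
by rewrite -cat1s -[in X in perm_eq _ X]cat1s -[_ :: _ ++ _]/((a :: s) ++ _) perm_catCA.
Qed.

Definition Dsh (f : seq nat -> seq nat) (s t : seq nat) :=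
  (if s is [::] then [::] else shuffle (f s) t) ++
  (if t is [::] then [::] else shuffle s (f t)).

Lemma R_sh s t : s ++ t <> [::] -> map behead (shuffle s t) = Dsh behead s t.
Proof.
case: s => [|a s]; case: t => [|b t] // _.
  by rewrite /Dsh !shuffle_s0.
by rewrite /Dsh shuffle_cons map_cat -!map_comp !map_id.
Qed.

Lemma sh_nonempty [s b t w] : w \in shuffle s (b :: t) -> w != [::].
Proof. by move/shuffle_perm/perm_size; case: w => //; rewrite size_cat /= addnS. Qed.
Lemma sh_nonempty' [a s t w] : w \in shuffle (a :: s) t -> w != [::].
Proof. by move/shuffle_perm/perm_size; case: w. Qed.

Lemma L_sh s t : s ++ t <> [::] -> perm_eq (map Lw (shuffle s t)) (Dsh Lw s t).
Proof.
elim: s t => [|a s IHs] t.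
  by case: t => //= b t _; rewrite cats0.
elim: t => [|b t IHt] _.
  by rewrite /Dsh !shuffle_s0 cats0.
rewrite shuffle_cons map_cat.
have -> : map Lw (map (cons a) (shuffle s (b :: t))) =
          map (cons a) (map Lw (shuffle s (b :: t))).
  rewrite -!map_comp; apply/eq_in_map => w Hw /=.
  by rewrite Lcons // (sh_nonempty Hw).
have -> : map Lw (map (cons b) (shuffle (a :: s) t)) =
          map (cons b) (map Lw (shuffle (a :: s) t)).
  rewrite -!map_comp; apply/eq_in_map => w Hw /=.
  by rewrite Lcons // (sh_nonempty' Hw).
apply: perm_trans (perm_cat (perm_map _ (IHs _ _)) (perm_map _ (IHt _))) _ => //.
  by case: s {IHs IHt}.
case: s {IHs IHt} => [|x s]; case: t => [|y t]; rewrite /Dsh ?L1.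
- by rewrite !shuffle_s0 !shuffle_0s; apply/permP => p; rewrite /=; lia.
- rewrite [Lw [:: b, y & t]]Lcons // shuffle_0s shuffle_cons !shuffle_0s !map_cat.
  by apply/permP => p; rewrite /= ?count_cat /=; lia.
- rewrite [Lw [:: a, x & s]]Lcons // shuffle_s0 shuffle_cons !shuffle_s0 !map_cat.
  by apply/permP => p; rewrite /= ?count_cat /=; lia.
- rewrite [Lw [:: b, y & t]]Lcons // [Lw [:: a, x & s]]Lcons // !shuffle_cons !map_cat.
  by apply/permP => p; rewrite /= ?count_cat /=; lia.
Qed.

Lemma size_Lw w : size (Lw w) = (size w).-1.
Proof. by rewrite /Lw size_take; case: w => //= x w; rewrite ltnSn. Qed.

Lemma Lw_uniq (u v : seq nat) : uniq (u ++ v) -> uniq (Lw u ++ v).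
Proof. by apply: subseq_uniq; apply: cat_subseq => //; apply: take_subseq. Qed.
Lemma Lw_uniq' (u v : seq nat) : uniq (u ++ v) -> uniq (u ++ Lw v).
Proof. by apply: subseq_uniq; apply: cat_subseq => //; apply: take_subseq. Qed.
Lemma R_uniq (u v : seq nat) : uniq (u ++ v) -> uniq (behead u ++ v).
Proof. by case: u => //= x u /andP[]. Qed.
Lemma R_uniq' (u v : seq nat) : uniq (u ++ v) -> uniq (u ++ behead v).
Proof. apply: subseq_uniq; apply: cat_subseq => //; case: v => //= x v; apply: (suffix_subseq [:: x]). Qed.

Section Main.
Variables (V : zmodType) (A : mould V).
Hypothesis HA : forall w : seq nat, uniq w -> (2 <= size w)%N ->
     A w = A (take (size w).-1 w) - A (behead w).

Lemma main_ind n (u v : seq nat) : (size u + size v <= n)%N -> u <> [::] -> v <> [::] ->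
  uniq (u ++ v) -> mould_lin A (shuffle u v) = 0.
Proof.
elim: n u v => [|n IH] u v.
  by case: u => // x u; rewrite leqn0 addn_eq0 /=.
move=> hs hu hv huv.
have uv : u ++ v <> [::] by move: hu; clear; case: u.
rewrite /mould_lin.
rewrite (eq_big_seq (fun w => A (Lw w) - A (behead w))); last first.
  move=> w /shuffle_perm Hw; rewrite HA //.
    by rewrite (perm_uniq Hw).
  rewrite (perm_size Hw) size_cat.
  move: hu hv; clear; case: u => // x u _; case: v => // y v _; by rewrite /= addnS.
rewrite big_split /= sumrN -(big_map Lw predT A) -(big_map behead predT A).
rewrite (perm_big _ (L_sh u v uv)) (R_sh u v uv) /Dsh.
case: u hu hs huv {uv} => [//|x u] _ hs huv; case: v hv hs huv => [//|y v] _ hs huv.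
rewrite !big_cat /=.
have E1 : \sum_(i <- shuffle (Lw (x :: u)) (y :: v)) A i =
          \sum_(i <- shuffle u (y :: v)) A i.
  case: u hs huv => [|z u] hs huv; first by rewrite L1.
  have h1 := Lw_uniq _ _ huv; have h2 := R_uniq _ _ huv.
  rewrite Lcons // in h1 *.
  have := IH (x :: Lw (z :: u)) (y :: v); rewrite /mould_lin => ->;
    try (by []); last by move: hs; rewrite /= size_Lw /=; lia.
  have := IH (z :: u) (y :: v); rewrite /mould_lin => -> //.
  all: try (by move: hs; rewrite /=; lia).
have E2 : \sum_(i <- shuffle (x :: u) (Lw (y :: v))) A i =
          \sum_(i <- shuffle (x :: u) v) A i.
  case: v hs huv {E1} => [|z v] hs huv; first by rewrite L1.
  have h1 := Lw_uniq' _ _ huv; have h2 := R_uniq' _ _ huv.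
  rewrite Lcons // in h1 *.
  have := IH (x :: u) (y :: Lw (z :: v)); rewrite /mould_lin => ->;
    try (by []); last by move: hs; rewrite /= size_Lw /=; lia.
  have := IH (x :: u) (z :: v); rewrite /mould_lin => -> //.
  all: try (by move: hs; rewrite /=; lia).
by rewrite E1 E2 subrr.
Qed.
End Main.

Theorem lemma1p29 (V : zmodType) (A : mould V) :
  A [::] = 0 ->
  (forall w : seq nat, uniq w -> (2 <= size w)%N ->
     A w = A (take (size w).-1 w) - A (behead w)) ->
  alternal A.
Proof.
move=> H0 HA; split => // p q hp hq.
apply: (@main_ind V A HA _ _ _ (leqnn _)).
- by case: p hp.
- by case: q hq.
- by rewrite -[p.+1]/(1 + p)%N -iotaD iota_uniq.
Qed.
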